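(* For $n\ge 1$ let $a_n$ be the number of words $w=w_1\cdots w_n$ over $\{1,2,3\}$ such that there is no $i$ with $w_{i+1}=w_i+1$ and no $i$ with $w_{i+2}=w_i+2$ (i.e. $w$ simultaneously avoids the place-difference-value patterns $(12,(\mathbb{P},\{1\},\mathbb{P}),\{(1,2,\{1\})\},(\mathbb{P},\mathbb{P}))$ and $(12,(\mathbb{P},\{2\},\mathbb{P}),\{(1,2,\{2\})\},(\mathbb{P},\mathbb{P}))$). Then $a_1=3$, $a_2=7$, $a_n=a_{n-1}+a_{n-2}+n+1$ for $n\ge 3$, and consequently $a_n=F_{n+5}-n-4$ for all $n\ge1$, where $F_1=F_2=1$ and $F_m=F_{m-1}+F_{m-2}$. *)

(* Defs.v *)
From mathcomp Require Import all_boot.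
Set Implicit Arguments. Unset Strict Implicit. Unset Printing Implicit Defensive.

(* Letters {1,2,3} are encoded as 'I_3 = {0,1,2} (letter k+1 <-> k);
   differences w_{i+1}-w_i are shift-invariant so this is harmless. *)

Definition avoids_both (n : nat) (w : n.-tuple 'I_3) : bool :=
  [forall i : 'I_n,
     ((i.+1 < n) ==> (nth 0 (map val w) i.+1 != (nth 0 (map val w) i).+1)) &&
     ((i.+2 < n) ==> (nth 0 (map val w) i.+2 != (nth 0 (map val w) i).+2))].

Definition a (n : nat) : nat := #|[set w : n.-tuple 'I_3 | avoids_both w]|.

Fixpoint fib (m : nat) : nat :=
  match m with
  | 0 => 0
  | 1 => 1
  | (k.+1 as k1).+1 => fib k1 + fib k
  end.

(* Main.v *)
Require Import Defs.
From mathcomp Require Import all_boot.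

Lemma cardc (T : finType) (P : pred T) : #|[set x | P x]| = count P (enum T).
Proof. rewrite cardsE cardE /enum_mem size_filter count_filter. apply: eq_count => x. by rewrite /= andbT. Qed.

Definition C (s : seq nat) (i : nat) : bool :=
  ((i.+1 < size s) ==> (nth 0 s i.+1 != (nth 0 s i).+1)) &&
  ((i.+2 < size s) ==> (nth 0 s i.+2 != (nth 0 s i).+2)).

Fixpoint gd (s : seq nat) : bool :=
  match s with
  | [::] => true
  | x :: s' => C s 0 && gd s'
  end.

Lemma gdE s : gd s = all (C s) (iota 0 (size s)).
Proof.
elim: s => [//|x s IH] /=. congr (_ && _).
rewrite IH -(addn0 1) iotaDl all_map. apply: eq_all => i /=.
by rewrite /C /= !ltnS.
Qed.

Lemma avoidsE n (w : n.-tuple 'I_3) : avoids_both w = gd (map val w).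
Proof.
rewrite gdE /C size_map size_tuple /avoids_both.
apply/forallP/allP => [H i|H i].
  rewrite mem_iota add0n => /= Hi. exact: (H (Ordinal Hi)).
by apply: (H i); rewrite mem_iota /=.
Qed.

Fixpoint words (n : nat) : seq (seq nat) :=
  match n with
  | 0 => [:: [::]]
  | n'.+1 => [seq x :: s | x <- iota 0 3, s <- words n']
  end.

Lemma words_uniq n : uniq (words n).
Proof.
elim: n => [//|n IH]. apply: (@allpairs_uniq _ _ _ cons (iota 0 3) (words n)) => //.
by move=> [x s] [y t] _ _ /= [-> ->].
Qed.

Lemma mem_words n s : (s \in words n) = (size s == n) && all (fun x => x < 3) s.
Proof.
elim: n s => [|n IH] s; first by case: s.
apply/allpairsP/idP => [[[x t] [/= Hx Ht ->]]|].
  move: Ht; rewrite IH /= eqSS => /andP[-> ->]. by move: Hx; rewrite !inE => /or3P[]/eqP->.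
case: s => [//|x s] /= /andP[Hs /andP[Hx Ha]].
exists (x, s); split => //=; first by rewrite !inE; move: Hx; case: x => [|[|[]]].
by change (s \in words n); rewrite IH -eqSS Hs.
Qed.

Lemma a_words n : a n = count gd (words n).
Proof.
rewrite /a cardc.
rewrite (eq_count (a2 := preim (fun w : n.-tuple 'I_3 => map val w) gd)); last first.
  by move=> w; rewrite /= avoidsE.
rewrite -count_map. apply/permP. apply: uniq_perm.
- rewrite map_inj_uniq ?enum_uniq //.
  move=> u v /= E. apply: val_inj. exact: (inj_map val_inj E).
- exact: words_uniq.
move=> s. rewrite mem_words. apply/mapP/idP => [[w _ ->]|/andP[/eqP Hs Ha]].
  rewrite size_map size_tuple eqxx /=. apply/allP => x /mapP[y _ ->]. exact: ltn_ord.
have Hsz : size (map (inord : nat -> 'I_3) s) == n by rewrite size_map Hs.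
exists (Tuple Hsz); first by rewrite mem_enum.
rewrite /= -map_comp -[LHS]map_id. apply/eq_in_map => x Hx /=.
rewrite inordK //. exact: (allP Ha).
Qed.

Definition h n x y := count (fun s => gd (x :: y :: s)) (words n).

Lemma count_words n (P : pred (seq nat)) :
  count P (words n.+1) = count (fun s => P (0 :: s)) (words n)
     + count (fun s => P (1 :: s)) (words n) + count (fun s => P (2 :: s)) (words n).
Proof.
rewrite /= !count_cat !count_map /=. by rewrite addn0 addnA.
Qed.

Lemma h0 x y : h 0 x y = (y != x.+1).
Proof. by rewrite /h /= /C /= !andbT addn0. Qed.

Lemma gd3 x y z s : gd [:: x, y, z & s] = [&& y != x.+1, z != x.+2 & gd [:: y, z & s]].
Proof. by rewrite [LHS]/= {1}/C /= -andbA. Qed.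

Lemma countbM (T : Type) (b : bool) (P : pred T) l :
  count (fun s => b && P s) l = b * count P l.
Proof. case: b; rewrite ?mul1n ?mul0n //. exact: count_pred0. Qed.

Lemma hS n x y : h n.+1 x y = (y != x.+1) *
  ((0 != x.+2) * h n y 0 + (1 != x.+2) * h n y 1 + (2 != x.+2) * h n y 2).
Proof.
rewrite {1}/h count_words.
rewrite !(eq_count (fun s => gd3 x y _ s)) !countbM.
by rewrite !mulnDr.
Qed.

From mathcomp Require Import zify.

Arguments fib : simpl never.
Lemma fibS m : fib m.+2 = fib m.+1 + fib m.
Proof. by []. Qed.

Lemma hform n : [/\ h n 0 0 = 1 /\ h n 0 1 = 0, h n 1 2 = 0,
  h n 1 0 = fib n.+2 /\ h n 2 0 = fib n.+2,
  [/\ h n 0 2 + 1 = fib n.+3, h n 1 1 + 1 = fib n.+3 & h n 2 1 + 1 = fib n.+3]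
  & h n 2 2 + n + 4 = fib n.+4.+1].
Proof.
elim: n => [|n [[H00 H01] H12 [H10 H20] [H02 H11 H21] H22]].
  by rewrite !h0.
rewrite !hS /=.
have F3 := fibS n.+1. have F4 := fibS n.+2. have F5 := fibS n.+3.
have F6 := fibS n.+4.
repeat split; lia.
Qed.

Lemma a_h n : a n.+2 = h n 0 0 + h n 0 1 + h n 0 2 + h n 1 0 + h n 1 1 + h n 1 2
  + h n 2 0 + h n 2 1 + h n 2 2.
Proof. rewrite a_words !count_words /h. lia. Qed.

Theorem mainTheorem10 :
  a 1 = 3 /\ a 2 = 7 /\
  (forall n : nat, 3 <= n -> a n = a n.-1 + a n.-2 + n + 1) /\
  (forall n : nat, 1 <= n -> a n + n + 4 = fib (n + 5)).
Proof.
have A1 : a 1 = 3 by rewrite a_words.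
have cf : forall n, 1 <= n -> a n + n + 4 = fib (n + 5).
  case=> [//|[|m] _]; first by rewrite A1.
  rewrite a_h. have [[H00 H01] H12 [H10 H20] [H02 H11 H21] H22] := hform m.
  have F3 := fibS m.+1. have F4 := fibS m.+2. have F5 := fibS m.+3.
  have F6 := fibS m.+4. have F7 := fibS m.+4.+1.
  rewrite (_ : m.+2 + 5 = m.+3.+4); last by lia. lia.
split => //. split; first by rewrite a_words.
split => // n Hn.
case: n Hn => [//|[//|[//|m]]] _ /=.
have X := cf m.+3 isT. have Y := cf m.+2 isT. have Z := cf m.+1 isT.
have F := fibS (m.+1 + 5).
rewrite (_ : m.+3 + 5 = (m.+1 + 5).+2) in X; last by lia.
rewrite (_ : m.+2 + 5 = (m.+1 + 5).+1) in Y; last by lia.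
lia.
Qed.
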